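(* (i) The set of double cones of Minkowski spacetime, with the Poincaré group as symmetry group, has a covariant path-frame system. (ii) The set of nonempty open connected intervals of $S^1$ having closure different from $S^1$, with the Möbius group as symmetry group, does not have a covariant path-frame system.
   Context: Both sets are ordered by inclusion and are causal posets. Double cones: sets $s(o_R)$ with $R>0$, $o_R=\{(t,\mathbf x):|t|+|\mathbf x|<R\}$ and $s$ a proper orthochronous Poincaré transformation; $o_1\perp o_2$ iff all points of $o_1$ are spacelike separated from all points of $o_2$. For intervals of $S^1$, $\perp$ is disjointness. The symmetry group $S$ acts by $o\mapsto s(o)$; $S_a$ denotes the stabilizer of $a$. A 1-simplex is $b=(|b|;\partial_0b,\partial_1b)$ with $\partial_0b,\partial_1b\subseteq|b|$, opposite $\overline b=(|b|;\partial_1b,\partial_0b)$, $s(b)=(s(|b|);s(\partial_0b),s(\partial_1b))$. $\mathrm T_1(K)$: 1-simplices with $\partial_0b\ne|b|\ne\partial_1b$. $\mathrm F(K)$: group generated by $\mathrm T_1(K)$ with $b^{-1}=\overline b$, with $S$ acting letterwise. A path from $a$ to $o$ is a word $b_n\cdots b_1$, $b_i\in\mathrm T_1(K)$ (empty if $a=o$ allowed), with $\partial_1b_1=a$, $\partial_0b_n=o$, $\partial_0b_i=\partial_1b_{i+1}$. A path-frame $P_o$ over $o$ is a choice of a path $p_{(o,a)}$ from $o$ to $a$ for each $a\in K$ with $p_{(o,o)}=1$. A covariant path-frame system is a family $\{P_o:o\in K\}$ with $s(p_{(a,x)})=p_{(s(a),s(x))}$ for all $a,x\in K$, $s\in S$.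 *)

(* Defs.v *)
From mathcomp Require Import all_boot all_order all_algebra.
From mathcomp Require Import all_classical all_reals.
From mathcomp Require Import complex trigo.
From Stdlib Require Import Relations.
Import GRing.Theory Num.Theory.

Set Implicit Arguments.
Unset Strict Implicit.
Unset Printing Implicit Defensive.

Local Open Scope classical_set_scope.
Local Open Scope ring_scope.

Record simplex1 (X : Type) := Simplex1 {
  supp : set X;
  bd0  : set X;
  bd1  : set X
}.

Definition opp_simplex (X : Type) (b : simplex1 X) : simplex1 X :=
  Simplex1 (supp b) (bd1 b) (bd0 b).

Definition act_simplex (X : Type) (s : X -> X) (b : simplex1 X) : simplex1 X :=
  Simplex1 (s @` supp b) (s @` bd0 b) (s @` bd1 b).

Definition is_simplex1 (X : Type) (K : set (set X)) (b : simplex1 X) : Prop :=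
  [/\ K (supp b), K (bd0 b), K (bd1 b), bd0 b `<=` supp b & bd1 b `<=` supp b].

Definition T1 (X : Type) (K : set (set X)) (b : simplex1 X) : Prop :=
  [/\ is_simplex1 K b, bd0 b <> supp b & bd1 b <> supp b].

(* Words over T_1(K); the group F(K) generated by T_1(K) with b^{-1} = \bar b
   is the quotient of words by cancellation of adjacent pairs b \bar b. *)
Inductive fg_step (X : Type) (K : set (set X)) :
    seq (simplex1 X) -> seq (simplex1 X) -> Prop :=
| fg_cancel (l1 l2 : seq (simplex1 X)) (b : simplex1 X) :
    T1 K b -> fg_step K (l1 ++ b :: opp_simplex b :: l2) (l1 ++ l2).

Definition fg_eq (X : Type) (K : set (set X)) : relation (seq (simplex1 X)) :=
  clos_refl_sym_trans _ (fg_step K).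

(* [is_path K a o w]: the list w = [:: b_1; ...; b_n] represents the word
   b_n ... b_1, which is a path from a to o: b_i \in T_1(K),
   d1 b_1 = a, d0 b_n = o, d0 b_i = d1 b_(i+1); empty only if a = o. *)
Fixpoint is_path (X : Type) (K : set (set X)) (a o : set X)
    (w : seq (simplex1 X)) : Prop :=
  match w with
  | [::] => a = o
  | b :: w' => [/\ T1 K b, bd1 b = a & is_path K (bd0 b) o w']
  end.

Definition has_covariant_path_frame_system (X : Type) (K : set (set X))
    (S : set (X -> X)) : Prop :=
  exists p : set X -> set X -> seq (simplex1 X),
    [/\ (forall o a, K o -> K a -> is_path K o a (p o a)),
        (forall o, K o -> fg_eq K (p o o) [::]) &
        (forall s a x, S s -> K a -> K x ->
           fg_eq K (map (act_simplex s) (p a x)) (p (s @` a) (s @` x)))].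

(* Minkowski spacetime R^{1+3}; points are column vectors, index 0 = time.   *)

Definition spatial_norm (R : realType) (x : 'cV[R]_4) : R :=
  Num.sqrt (\sum_(i < 3) x (lift ord0 i) ord0 ^+ 2).

Definition std_double_cone (R : realType) (r : R) : set 'cV[R]_4 :=
  [set x : 'cV[R]_4 | `|x ord0 ord0| + spatial_norm x < r].

Definition minkowski_metric (R : realType) : 'M[R]_4 :=
  diag_mx (\row_(i < 4) (if i == ord0 then 1 else -1)).

Definition proper_ortho_lorentz (R : realType) (L : 'M[R]_4) : Prop :=
  [/\ L^T *m minkowski_metric R *m L = minkowski_metric R,
      \det L = 1 & 0 < L ord0 ord0].

Definition poincare (R : realType) : set ('cV[R]_4 -> 'cV[R]_4) :=
  [set s | exists (L : 'M[R]_4) (a : 'cV[R]_4),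
     proper_ortho_lorentz L /\ forall x, s x = L *m x + a].

Definition double_cones (R : realType) : set (set 'cV[R]_4) :=
  [set A | exists (s : 'cV[R]_4 -> 'cV[R]_4) (r : R),
     [/\ poincare s, 0 < r & A = s @` std_double_cone r]].

(* The circle S^1 = {z \in C : |z| = 1} and the Moebius group PSU(1,1)       *)
(* (~ PSL(2,R)) acting by z |-> (a z + b) / (conj b z + conj a).             *)

Definition expi (R : realType) (t : R) : R[i] := Complex (cos t) (sin t).

Definition arc (R : realType) (alpha beta : R) : set R[i] :=
  [set z | exists t, alpha < t < beta /\ z = expi t].

(* nonempty open connected intervals of S^1 with closure <> S^1:
   exactly the open arcs of length in (0, 2 pi). *)
Definition circle_intervals (R : realType) : set (set R[i]) :=
  [set I | exists alpha beta : R,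
     alpha < beta < alpha + 2 * pi /\ I = arc alpha beta].

Definition mobius (R : realType) : set (R[i] -> R[i]) :=
  [set s | exists a b : R[i],
     a * a^* - b * b^* = 1 /\
     forall z, s z = (a * z + b) / (b^* * z + a^*)].

(* Main.v *)
Require Import Defs.
From mathcomp Require Import all_boot all_order all_algebra.
From mathcomp Require Import all_classical all_reals.
From mathcomp Require Import complex trigo.
From mathcomp Require Import ring lra.
From Stdlib Require Import Relations.
Import Order.TTheory GRing.Theory Num.Theory.
Set Implicit Arguments.
Unset Strict Implicit.
Unset Printing Implicit Defensive.
Local Open Scope classical_set_scope.
Local Open Scope ring_scope.


Section FR.
Variable X : Type.
Implicit Types (b x y : simplex1 X) (r w : seq (simplex1 X)).

Lemma oppK b : opp_simplex (opp_simplex b) = b.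
Proof. by case: b. Qed.

Definition cancelw x r :=
  match r with
  | y :: r' => if `[< y = opp_simplex x >] then r' else x :: r
  | [::] => [:: x]
  end.

Definition red w := foldr cancelw [::] w.

Fixpoint reduced r : Prop :=
  match r with
  | x :: r' => match r' with
               | y :: _ => y <> opp_simplex x /\ reduced r'
               | [::] => True
               end
  | [::] => True
  end.

Lemma reduced_tail x r : reduced (x :: r) -> reduced r.
Proof. by case: r => //= y r [] _. Qed.

Lemma reduced_cancel x r : reduced r -> reduced (cancelw x r).
Proof.
case: r => //= y r Hr.
case: asboolP => [_|Hy]; first exact: reduced_tail Hr.
by split.
Qed.

Lemma red_reduced w : reduced (red w).
Proof. by elim: w => //= x w IH; exact: reduced_cancel. Qed.

Lemma cancel_opp b r : reduced r -> cancelw b (cancelw (opp_simplex b) r) = r.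
Proof.
case: r => [|y r] /=.
  by rewrite asboolT.
rewrite oppK; have [<-|Hy] := pselect (y = b) => Hr.
  rewrite asboolT //.
  case: r Hr => [|y' r] /=; first by [].
  by case=> Hy' _; rewrite asboolF.
by rewrite asboolF //= asboolT.
Qed.

Lemma red_cat l1 l2 : red (l1 ++ l2) = foldr cancelw (red l2) l1.
Proof. by rewrite /red foldr_cat. Qed.

Lemma fg_red (K : set (set X)) w1 w2 : fg_eq K w1 w2 -> red w1 = red w2.
Proof.
move=> H; induction H as [u v Hs| u | u v _ IH | u v t _ IH1 _ IH2].
- case: Hs => l1 l2 b _.
  rewrite !red_cat /=; congr (foldr _ _ _).
  by rewrite cancel_opp //; exact: red_reduced.
- by [].
- by rewrite IH.
- by rewrite IH1 IH2.
Qed.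

Lemma red_path (K : set (set X)) A B w : is_path K A B w -> is_path K A B (red w).
Proof.
elim: w A => //= x w IH A [Tx Hx Hw].
have := IH _ Hw; case: (red w) => [|y r] /=.
  by move=> H; split.
case: asboolP => [-> | _] /=; last by move=> H; split.
by case=> _ _; rewrite Hx.
Qed.

Fixpoint allw (P : simplex1 X -> Prop) w : Prop :=
  if w is x :: w' then P x /\ allw P w' else True.

Lemma allw_red P w : allw P w -> allw P (red w).
Proof.
elim: w => //= x w IH [Px Hw]; have := IH Hw.
case: (red w) => [|y r] //=.
case: asboolP => [_|_] /=; first by case.
by move=> H; split.
Qed.

Lemma red_map (P : simplex1 X -> Prop) (f : simplex1 X -> simplex1 X) w :
  (forall b, P b -> P (opp_simplex b)) ->
  (forall b, f (opp_simplex b) = opp_simplex (f b)) ->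
  (forall x y, P x -> P y -> f x = f y -> x = y) ->
  allw P w -> red (map f w) = map f (red w).
Proof.
move=> Popp fopp finj; elim: w => //= x w IH [Px Hw].
rewrite IH //; have := allw_red Hw.
case: (red w) => [|y r] //= [Py _].
case: asboolP => [Hy|Hy]; case: asboolP => [Hy'|Hy'] //=.
- by exfalso; apply: Hy'; apply: finj => //; [exact: Popp | rewrite fopp].
- by exfalso; apply: Hy; rewrite Hy' fopp.
Qed.

End FR.

Section Circ.
Variable R : realType.
Local Notation Re := (@complex.Re R).
Local Notation Im := (@complex.Im R).

Definition Zpt (s : R) : R[i] :=
  Complex ((1 - s ^+ 2) / (1 + s ^+ 2)) ((2 * s) / (1 + s ^+ 2)).

Definition Aco (m : R) : R := (1 + m ^+ 2) / (2 * m).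
Definition Bco (m : R) : R := (1 - m ^+ 2) / (2 * m).

Definition dl (m : R) (z : R[i]) : R[i] :=
  ((Aco m)%:C%C * z + (Bco m)%:C%C) / (Num.conj ((Bco m)%:C%C) * z + Num.conj ((Aco m)%:C%C)).

Lemma conjR (x : R) : (Num.conj (x%:C%C) : R[i]) = (x%:C)%C.
Proof. by apply: conj_Creal; rewrite complex_real. Qed.

Lemma dl_mobius m : 0 < m -> mobius (dl m).
Proof.
move=> m0; exists (Aco m)%:C%C, (Bco m)%:C%C; split => //.
rewrite !conjR -!rmorphM -rmorphB /=.
have -> : Aco m * Aco m - Bco m * Bco m = 1.
  rewrite /Aco /Bco; field; lra.
by [].
Qed.

Lemma sq1 (s : R) : 1 + s ^+ 2 != 0.
Proof. have := sqr_ge0 s; lra. Qed.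

Lemma dlZ m s : 0 < m -> dl m (Zpt s) = Zpt (m ^+ 2 * s).
Proof.
move=> m0; rewrite /dl !conjR.
have Dn0 : (Bco m)%:C%C * Zpt s + (Aco m)%:C%C != 0.
  apply/eqP; rewrite /Zpt /Aco /Bco; simpc => /=; case => H _.
  move: H; rewrite (_ : _ + _ = (1 + (m * s) ^+ 2) / (m * (1 + s ^+ 2))).
    by move/eqP; rewrite gt_eqF // divr_gt0 // ?mulr_gt0 //; have := sqr_ge0 (m * s); have := sqr_ge0 s; lra.
  by field; rewrite sq1 gt_eqF.
apply/(canLR (mulfK Dn0)).
rewrite /Zpt /Aco /Bco; simpc.
have m2 : 2 * m != 0 by rewrite mulf_neq0 // gt_eqF.
have s1 := sq1 s; have s2 := sq1 (m ^+ 2 * s).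
apply/eqP; rewrite eq_complex /=; apply/andP; split; apply/eqP.
  by field; rewrite s1 s2 gt_eqF.
by field; rewrite s1 s2 gt_eqF.
Qed.

Definition up (z : R[i]) := Re z ^+ 2 + Im z ^+ 2 = 1 /\ 0 < Im z.
Definition lo (z : R[i]) := Re z ^+ 2 + Im z ^+ 2 = 1 /\ Im z < 0.

Lemma Zp_unit s : Re (Zpt s) ^+ 2 + Im (Zpt s) ^+ 2 = 1.
Proof. by rewrite /Zpt /=; field; rewrite sq1. Qed.

Lemma Zp_up s : 0 < s -> up (Zpt s).
Proof.
move=> s0; split; first exact: Zp_unit.
by rewrite /= divr_gt0 //; have := sqr_ge0 s; lra.
Qed.

Lemma Zp_lo s : s < 0 -> lo (Zpt s).
Proof.
move=> s0; split; first exact: Zp_unit.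
by rewrite /= pmulr_llt0 ?invr_gt0; have := sqr_ge0 s; lra.
Qed.

Lemma Zp_K s : Im (Zpt s) / (1 + Re (Zpt s)) = s.
Proof. by rewrite /=; field; rewrite sq1 /=; apply/eqP; have := sqr_ge0 s; lra. Qed.

Lemma Zp_inv z : Re z ^+ 2 + Im z ^+ 2 = 1 -> 1 + Re z != 0 ->
  z = Zpt (Im z / (1 + Re z)).
Proof.
case: z => x y /= H D.
have E : y ^+ 2 = 1 - x ^+ 2 by lra.
have D2 : (1 + x) ^+ 2 + y ^+ 2 != 0.
  by rewrite E; apply/eqP => h; move/eqP: D; apply; nra.
apply/eqP; rewrite eq_complex /=; apply/andP; split; rewrite -subr_eq0; apply/eqP.
  have -> : x - (1 - (y / (1 + x)) ^+ 2) / (1 + (y / (1 + x)) ^+ 2) =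
            (1 + x) * (x ^+ 2 + y ^+ 2 - 1) / ((1 + x) ^+ 2 + y ^+ 2).
    by field; rewrite D D2.
  by rewrite H subrr mulr0 mul0r.
have -> : y - 2 * (y / (1 + x)) / (1 + (y / (1 + x)) ^+ 2) =
          y * (x ^+ 2 + y ^+ 2 - 1) / ((1 + x) ^+ 2 + y ^+ 2).
  by field; rewrite D D2.
by rewrite H subrr mulr0 mul0r.
Qed.

Lemma unit_D z : Re z ^+ 2 + Im z ^+ 2 = 1 -> Im z != 0 -> 1 + Re z != 0.
Proof.
move=> H P; apply/eqP => h.
have hr : Re z = -1 by lra.
move: H; rewrite hr => H.
have : Im z ^+ 2 = 0 by lra.
by move/eqP; rewrite sqrf_eq0 (negbTE P).
Qed.

Lemma up_Zp z : up z -> exists2 s, 0 < s & z = Zpt s.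
Proof.
case=> H P.
have D := unit_D H (lt0r_neq0 P).
exists (Im z / (1 + Re z)); last exact: Zp_inv.
have : -1 <= Re z.
  have : Re z ^+ 2 <= 1 by have := sqr_ge0 (Im z); lra.
  by nra.
by move=> h; rewrite divr_gt0 //; move: D; rewrite lt_def => ->; lra.
Qed.

Lemma lo_Zp z : lo z -> exists2 s, s < 0 & z = Zpt s.
Proof.
case=> H P.
have D := unit_D H (ltr0_neq0 P).
exists (Im z / (1 + Re z)); last exact: Zp_inv.
have : -1 <= Re z.
  have : Re z ^+ 2 <= 1 by have := sqr_ge0 (Im z); lra.
  by nra.
move=> h; rewrite pmulr_llt0 // invr_gt0; move: D; rewrite lt_def => ->; lra.
Qed.

Lemma expi_unit t : Re (expi t) ^+ 2 + Im (expi t) ^+ 2 = 1.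
Proof. by rewrite /= cos2Dsin2. Qed.

Lemma two_pi : 2 * pi = pi *+ 2 :> R.
Proof. by rewrite mulr_natl. Qed.

Lemma o_char z : Defs.arc 0 pi z <-> up z.
Proof.
split.
  case=> t [/andP [t0 tp] ->]; split; first exact: expi_unit.
  by rewrite /= sin_gt0_pi // t0 tp.
case: z => x y [/= H P].
have hx : -1 < x < 1 by apply/andP; split; nra.
have hx' : x \in `[-1, 1] by rewrite in_itv /=; apply/andP; split; lra.
exists (acos x); split.
  apply/andP; split; [apply: acos_gt0 | apply: acos_ltpi]; lra.
rewrite /expi acosK // sin_acos; last lra.
have -> : 1 - x ^+ 2 = y ^+ 2 by lra.
by rewrite sqrtr_sqr gtr0_norm.
Qed.

Lemma a_char z : Defs.arc pi (2 * pi) z <-> lo z.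
Proof.
split.
  case=> t [/andP [t0 tp] ->]; split; first exact: expi_unit.
  rewrite /=.
  have : 0 < sin (t - pi) by rewrite sin_gt0_pi //; apply/andP; split; lra.
  by rewrite sinB cospi sinpi; lra.
case: z => x y [/= H P].
have hx : -1 < x < 1 by apply/andP; split; nra.
have hx' : x \in `[-1, 1] by rewrite in_itv /=; apply/andP; split; lra.
have g0 : 0 < acos x by apply: acos_gt0; lra.
have gp : acos x < pi by apply: acos_ltpi; lra.
exists (2 * pi - acos x); split.
  by apply/andP; split; lra.
rewrite /expi cosB sinB two_pi cos2pi sin2pi acosK // sin_acos; last lra.
have -> : 1 - x ^+ 2 = y ^+ 2 by lra.
rewrite sqrtr_sqr ltr0_norm //.
by congr Complex; lra.
Qed.

Definition unitc (z : R[i]) := Re z ^+ 2 + Im z ^+ 2 = 1.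

Lemma cos_lt1 (d : R) : 0 < d < pi *+ 2 -> cos d < 1.
Proof.
case/andP=> d0 d2.
have -> : d = (d / 2) *+ 2 by rewrite mulr2n; field.
rewrite cos_mulr2n cos2sin2.
have : 0 < sin (d / 2) by rewrite sin_gt0_pi //; apply/andP; split; lra.
move=> h; have := mulr_gt0 h h; rewrite -expr2 mulr2n; lra.
Qed.

Lemma arc_unit (al be : R) (z : R[i]) : Defs.arc al be z -> unitc z.
Proof. by case=> t [_ ->]; exact: expi_unit. Qed.

Lemma arc_notin (al be t : R) : be < al + 2 * pi -> be - 2 * pi <= t <= al ->
  ~ Defs.arc al be (expi t).
Proof.
move=> hb /andP [h1 h2] [s [/andP [s1 s2] E]].
case: E => Ec Es.
have : cos (s - t) = 1 by rewrite cosB -Ec -Es cos2Dsin2.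
have : cos (s - t) < 1 by apply: cos_lt1; rewrite -two_pi; apply/andP; split; lra.
lra.
Qed.

Lemma cos_pm1 (t : R) : sin t = 0 -> cos t = 1 \/ cos t = -1.
Proof.
move=> h; have := cos2Dsin2 t; rewrite h expr0n /= addr0 => /eqP.
rewrite sqrf_eq1 => /orP [] /eqP; by [left | right].
Qed.

Lemma B3 (al be : R) : al < be -> be < al + 2 * pi ->
  (forall z, up z -> Defs.arc al be z) -> (forall z, lo z -> Defs.arc al be z) -> False.
Proof.
move=> hab hb Hup Hlo.
have nA : ~ Defs.arc al be (expi al) by apply: arc_notin => //; apply/andP; split; lra.
have sa : sin al = 0.
  have [h|h|h] := ltgtP (sin al) 0 => //.
    by exfalso; apply: nA; apply: Hlo; split; [exact: expi_unit | ].
  by exfalso; apply: nA; apply: Hup; split; [exact: expi_unit | ].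
set e := (2 * pi - (be - al)) / 2.
have e0 : 0 < sin e by rewrite sin_gt0_pi //; apply/andP; split; rewrite /e; lra.
have nT : ~ Defs.arc al be (expi (al - e)) by apply: arc_notin => //; apply/andP; split; rewrite /e; lra.
have se : sin (al - e) = - cos al * sin e by rewrite sinB sa mul0r sub0r mulNr.
case: (cos_pm1 sa) => ca; rewrite ca in se.
  by apply: nT; apply: Hlo; split; [exact: expi_unit | rewrite /= se; lra].
by apply: nT; apply: Hup; split; [exact: expi_unit | rewrite /= se; lra].
Qed.

Lemma B2 (al be t0 : R) : be < al + 2 * pi -> al < t0 < be -> sin t0 = 0 ->
  exists z, Defs.arc al be z /\ lo z.
Proof.
move=> hb /andP [h1 h2] s0.
case: (cos_pm1 s0) => c0.
  set e := (t0 - al) / 2.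
  have e0 : 0 < sin e by rewrite sin_gt0_pi //; apply/andP; split; rewrite /e; lra.
  exists (expi (t0 - e)); split.
    by exists (t0 - e); split => //; apply/andP; split; rewrite /e; lra.
  split; first exact: expi_unit.
  by rewrite /= sinB s0 c0; lra.
set e := (be - t0) / 2.
have e0 : 0 < sin e by rewrite sin_gt0_pi //; apply/andP; split; rewrite /e; lra.
exists (expi (t0 + e)); split.
  by exists (t0 + e); split => //; apply/andP; split; rewrite /e; lra.
split; first exact: expi_unit.
by rewrite /= sinD s0 c0; lra.
Qed.

Notation oI := (Defs.arc (0 : R) pi).
Notation aI := (Defs.arc pi (2 * pi : R)).

Lemma dl_o m : 0 < m -> dl m @` oI = oI.
Proof.
move=> m0; apply/seteqP; split => w.
  case=> z /o_char /up_Zp [s s0 ->] <-; rewrite dlZ //.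
  by apply/o_char; apply: Zp_up; rewrite mulr_gt0 // exprn_gt0.
move/o_char/up_Zp => [s s0 ->].
have m2 : m ^+ 2 != 0 by rewrite expf_neq0 // lt0r_neq0.
exists (Zpt (s / m ^+ 2)).
  by apply/o_char; apply: Zp_up; rewrite divr_gt0 // exprn_gt0.
by rewrite dlZ // mulrC mulfVK.
Qed.

Lemma dl_a m : 0 < m -> dl m @` aI = aI.
Proof.
move=> m0; apply/seteqP; split => w.
  case=> z /a_char /lo_Zp [s s0 ->] <-; rewrite dlZ //.
  by apply/a_char; apply: Zp_lo; rewrite pmulr_rlt0 // exprn_gt0.
move/a_char/lo_Zp => [s s0 ->].
have m2 : m ^+ 2 != 0 by rewrite expf_neq0 // lt0r_neq0.
exists (Zpt (s / m ^+ 2)).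
  by apply/a_char; apply: Zp_lo; rewrite pmulr_llt0 // invr_gt0 exprn_gt0.
by rewrite dlZ // mulrC mulfVK.
Qed.

Lemma dl_trans z w : aI z -> aI w -> exists2 m, 0 < m & dl m z = w.
Proof.
move=> /a_char /lo_Zp [s s0 ->] /a_char /lo_Zp [s' s0' ->].
have q0 : 0 < s' / s by rewrite -divrNN divr_gt0 // oppr_gt0.
exists (Num.sqrt (s' / s)); first by rewrite sqrtr_gt0.
rewrite dlZ ?sqrtr_gt0 // sqr_sqrtr ?ltW //.
by rewrite mulfVK // ltr0_neq0.
Qed.

Definition m1 : R[i] := Complex (-1) 0.

Lemma unit_cases z : unitc z -> z = m1 \/ exists s, z = Zpt s.
Proof.
move=> H; have [h|h] := eqVneq (1 + Re z) 0.
  left; case: z H h => x y /= H h.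
  have hx : x = -1 by lra.
  rewrite /unitc /= hx in H; have : y ^+ 2 = 0 by lra.
  by move/eqP; rewrite sqrf_eq0 => /eqP ->; rewrite hx.
by right; exists (Im z / (1 + Re z)); apply: Zp_inv.
Qed.

Lemma Zp_m1 s : Zpt s <> m1.
Proof.
case=> h _; move: h; apply/eqP; rewrite -subr_eq0.
have -> : (1 - s ^+ 2) / (1 + s ^+ 2) - -1 = 2 / (1 + s ^+ 2) by field; rewrite sq1.
by apply: lt0r_neq0; rewrite divr_gt0 //; have := sqr_ge0 s; lra.
Qed.

Lemma dl_m1 m : 0 < m -> dl m m1 = m1.
Proof.
move=> m0; rewrite /dl !conjR /m1.
have D : (Bco m)%:C%C * (Complex (-1) 0) + (Aco m)%:C%C = (Aco m - Bco m)%:C%C.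
  by simpc; apply/eqP; rewrite eq_complex /= !eqxx andbT; apply/eqP; ring.
have Nu : (Aco m)%:C%C * (Complex (-1) 0) + (Bco m)%:C%C = (Bco m - Aco m)%:C%C.
  by simpc; apply/eqP; rewrite eq_complex /= !eqxx andbT; apply/eqP; ring.
rewrite D Nu -fmorph_div /=.
have -> : (Bco m - Aco m) / (Aco m - Bco m) = -1.
  by rewrite /Aco /Bco; field; apply/andP; split; apply/eqP; nra.
by [].
Qed.

Lemma Zp_inj s s' : Zpt s = Zpt s' -> s = s'.
Proof. by move=> h; rewrite -(Zp_K s) -(Zp_K s') h. Qed.

Lemma dl_inj m z1 z2 : 0 < m -> unitc z1 -> unitc z2 -> dl m z1 = dl m z2 -> z1 = z2.
Proof.
move=> m0 /unit_cases [->|[s ->]] /unit_cases [->|[s' ->]] //; rewrite ?dl_m1 ?dlZ //.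
- by move=> h; exfalso; exact: (Zp_m1 (esym h)).
- by move=> h; exfalso; exact: (Zp_m1 h).
move/Zp_inj => h; congr Zpt.
have m2 : m ^+ 2 != 0 by rewrite expf_neq0 // lt0r_neq0.
by rewrite -(mulKf m2 s) h mulKf.
Qed.

End Circ.

Lemma path_allw (X : Type) (K : set (set X)) A B w :
  is_path K A B w -> allw (fun b => T1 K b) w.
Proof. by elim: w A => //= x w IH A [Tx _ Hw]; split => //; exact: IH Hw. Qed.

Lemma allw_sub (X : Type) (P Q : simplex1 X -> Prop) w :
  (forall b, P b -> Q b) -> allw P w -> allw Q w.
Proof. by move=> PQ; elim: w => //= x w IH [Px Hw]; split; [exact: PQ | exact: IH]. Qed.

Lemma image_inj_on (T : Type) (f : T -> T) (U : set T) (A B : set T) :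
  (forall x y, U x -> U y -> f x = f y -> x = y) ->
  A `<=` U -> B `<=` U -> f @` A = f @` B -> A = B.
Proof.
move=> finj AU BU E; apply/seteqP; split => x Ax.
  have : (f @` B) (f x) by rewrite -E; exists x.
  by case=> y By /(finj _ _ (BU _ By) (AU _ Ax)) <-.
have : (f @` A) (f x) by rewrite E; exists x.
by case=> y Ay /(finj _ _ (AU _ Ay) (BU _ Ax)) <-.
Qed.

Section P2.
Variable R : realType.
Local Notation K := (@circle_intervals R).
Local Notation oI := (Defs.arc (0 : R) pi).
Local Notation aI := (Defs.arc pi (2 * pi : R)).

Definition Pu (b : simplex1 R[i]) :=
  [/\ supp b `<=` @unitc R, bd0 b `<=` @unitc R & bd1 b `<=` @unitc R].

Lemma K_unit (A : set R[i]) : K A -> A `<=` @unitc R.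
Proof. by case=> al [be [_ ->]] z; exact: arc_unit. Qed.

Lemma T1_Pu b : T1 K b -> Pu b.
Proof. by case=> [[h1 h2 h3 _ _] _ _]; split; exact: K_unit. Qed.

Lemma Ko : K oI.
Proof. exists 0, pi; split => //; apply/andP; split; have := pi_gt0 R; lra. Qed.

Lemma Ka : K aI.
Proof. exists pi, (2 * pi); split => //; apply/andP; split; have := pi_gt0 R; lra. Qed.

Lemma oa_neq : oI <> aI.
Proof.
move=> E.
have h : oI (Zpt 1) by apply/o_char; apply: Zp_up; lra.
rewrite E in h; move/a_char: h => [_ h1].
have := Zp_up (ltr01 : (0 : R) < 1); case=> _ h2; by move: h1; rewrite ltNge (ltW h2).
Qed.

Lemma no_inv_Y (Y : set R[i]) : K Y -> oI `<=` Y -> oI <> Y ->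
  (forall m, 0 < m -> dl m @` Y = Y) -> False.
Proof.
case=> al [be [/andP [hab hb] EY]] sub neq inv.
have [z [Yz nz]] : exists z, Y z /\ ~ oI z.
  apply: contra_notP neq => H; apply/seteqP; split => // z Yz.
  by apply: contra_notP H => nz; exists z.
have [z' [Yz' az']] : exists z', Y z' /\ aI z'.
  move: (Yz); rewrite {1}EY => -[t0 [/andP [t1 t2] Ez]].
  have [h|h|h] := ltgtP (sin t0) 0.
  - by exists z; split => //; apply/a_char; rewrite Ez; split; [exact: expi_unit | ].
  - by exfalso; apply: nz; apply/o_char; rewrite Ez; split; [exact: expi_unit | ].
  - have [z' [Y' lz']] := B2 hb (introT andP (conj t1 t2)) h.
    by exists z'; split; [rewrite EY | apply/a_char].
have allY : forall w, lo w -> Y w.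
  move=> w /a_char aw; have [m m0 E] := dl_trans az' aw.
  by rewrite -(inv m m0) -E; exists z'.
apply: (B3 hab hb); rewrite -EY => w hw; first by apply: sub; apply/o_char.
exact: allY.
Qed.

Lemma part2 : ~ has_covariant_path_frame_system K (@mobius R).
Proof.
case=> p [Hpath _ Hcov].
have Pw := Hpath _ _ Ko Ka.
have Pr := red_path Pw.
have Fix : forall m, 0 < m ->
    map (act_simplex (dl m)) (red (p oI aI)) = red (p oI aI).
  move=> m m0; have := Hcov (dl m) oI aI (dl_mobius m0) Ko Ka.
  rewrite dl_o // dl_a // => /fg_red E; rewrite -{2}E.
  apply/esym; apply: (@red_map _ Pu).
  - by move=> b [h1 h2 h3]; split.
  - by [].
  - move=> x y [x1 x2 x3] [y1 y2 y3].
    case: x x1 x2 x3 => sx ax bx; case: y y1 y2 y3 => sy ay by_ /= x1 x2 x3 y1 y2 y3.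
    case=> E1 E2 E3.
    have finj : forall z1 z2, unitc z1 -> unitc z2 -> dl m z1 = dl m z2 -> z1 = z2.
      by move=> z1 z2; exact: dl_inj.
    by rewrite (image_inj_on finj y1 x1 E1) (image_inj_on finj y2 x2 E2)
               (image_inj_on finj y3 x3 E3).
  - by apply: allw_sub (path_allw Pw) => b; exact: T1_Pu.
move: Pr Fix; case: (red (p oI aI)) => [|b r] /=.
  by move=> E; exfalso; exact: oa_neq.
case=> Tb Eb _ Fix.
have Tb' := Tb; case: Tb' => [[KY _ _ _ s1] _ n1].
apply: (no_inv_Y KY); first by rewrite -Eb.
  by rewrite -Eb => E; apply: n1; rewrite E.
move=> m m0; have := Fix m m0; case => + _.
by move=> E; rewrite -[in RHS]E.
Qed.

End P2.

Section Mink.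
Variable R : realType.
Local Notation V := 'cV[R]_4.

Definition Nm (x : V) : R := `|x ord0 ord0| + spatial_norm x.

Lemma tri3 (a1 a2 a3 b1 b2 b3 : R) :
  Num.sqrt ((a1 + b1) ^+ 2 + (a2 + b2) ^+ 2 + (a3 + b3) ^+ 2) <=
  Num.sqrt (a1 ^+ 2 + a2 ^+ 2 + a3 ^+ 2) + Num.sqrt (b1 ^+ 2 + b2 ^+ 2 + b3 ^+ 2).
Proof.
set A := a1 ^+ 2 + a2 ^+ 2 + a3 ^+ 2; set B := b1 ^+ 2 + b2 ^+ 2 + b3 ^+ 2.
have A0 : 0 <= A by rewrite /A; have := sqr_ge0 a1; have := sqr_ge0 a2; have := sqr_ge0 a3; lra.
have B0 : 0 <= B by rewrite /B; have := sqr_ge0 b1; have := sqr_ge0 b2; have := sqr_ge0 b3; lra.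
set S := a1 * b1 + a2 * b2 + a3 * b3.
have SS : S ^+ 2 <= A * B.
  rewrite /S /A /B.
  have E : A * B - S ^+ 2 = (a1 * b2 - a2 * b1) ^+ 2 + (a1 * b3 - a3 * b1) ^+ 2 + (a2 * b3 - a3 * b2) ^+ 2.
    by rewrite /A /B /S; ring.
  have := sqr_ge0 (a1 * b2 - a2 * b1); have := sqr_ge0 (a1 * b3 - a3 * b1);
  have := sqr_ge0 (a2 * b3 - a3 * b2); rewrite /A /B /S in E; lra.
have Suv : S <= Num.sqrt A * Num.sqrt B.
  rewrite -sqrtrM //; apply: le_trans (ler_norm S) _.
  by rewrite -sqrtr_sqr ler_wsqrtr.
have uv0 : 0 <= Num.sqrt A + Num.sqrt B by rewrite addr_ge0 ?sqrtr_ge0.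
rewrite -(ger0_norm uv0) -sqrtr_sqr ler_wsqrtr //.
have -> : (a1 + b1) ^+ 2 + (a2 + b2) ^+ 2 + (a3 + b3) ^+ 2 = A + B + S *+ 2.
  by rewrite /A /B /S; ring.
rewrite [X in _ <= X]sqrrD !sqr_sqrtr //.
rewrite mulr2n mulr2n; lra.
Qed.

Lemma SN_add (x y : V) : spatial_norm (x + y) <= spatial_norm x + spatial_norm y.
Proof. rewrite /spatial_norm !big_ord_recl !big_ord0 !mxE !addr0 !addrA. exact: tri3. Qed.

Lemma SN_scale (c : R) (x : V) : spatial_norm (c *: x) = `|c| * spatial_norm x.
Proof.
rewrite /spatial_norm -sqrtr_sqr -sqrtrM ?sqr_ge0 // mulr_sumr.
by congr Num.sqrt; apply: eq_bigr => i _; rewrite !mxE exprMn.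
Qed.

Lemma SN_ge0 (x : V) : 0 <= spatial_norm x.
Proof. exact: sqrtr_ge0. Qed.

Lemma Nm_ge0 (x : V) : 0 <= Nm x.
Proof. by rewrite /Nm addr_ge0 ?SN_ge0. Qed.

Lemma Nm_add (x y : V) : Nm (x + y) <= Nm x + Nm y.
Proof.
rewrite /Nm mxE; have := SN_add x y; have := ler_normD (x ord0 ord0) (y ord0 ord0).
lra.
Qed.

Lemma Nm_scale (c : R) (x : V) : Nm (c *: x) = `|c| * Nm x.
Proof. by rewrite /Nm SN_scale mxE normrM mulrDr. Qed.

Lemma Nm_opp (x : V) : Nm (- x) = Nm x.
Proof. by rewrite -scaleN1r Nm_scale normrN normr1 mul1r. Qed.

Lemma sqrt3_le (a b c : R) : Num.sqrt (a ^+ 2 + b ^+ 2 + c ^+ 2) <= `|a| + `|b| + `|c|.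
Proof.
have h0 : 0 <= `|a| + `|b| + `|c| by rewrite !addr_ge0.
rewrite -(ger0_norm h0) -sqrtr_sqr ler_wsqrtr //.
rewrite -(real_normK (num_real a)) -(real_normK (num_real b)) -(real_normK (num_real c)).
have := normr_ge0 a; have := normr_ge0 b; have := normr_ge0 c.
set p := `|a|; set q := `|b|; set r := `|c|; nra.
Qed.

Lemma Nm_le_sum (x : V) : Nm x <= \sum_(i < 4) `|x i ord0|.
Proof.
rewrite big_ord_recl /Nm lerD2l /spatial_norm.
rewrite !big_ord_recl !big_ord0 !addr0 !addrA.
exact: sqrt3_le.
Qed.

Lemma Nm_coord (x : V) (i : 'I_4) : `|x i ord0| <= Nm x.
Proof.
rewrite /Nm; case: (unliftP ord0 i) => [j ->|->].
  have : `|x (lift ord0 j) ord0| <= spatial_norm x.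
    rewrite /spatial_norm -sqrtr_sqr ler_wsqrtr // (bigD1 j) //= lerDl.
    by apply: sumr_ge0 => k _; exact: sqr_ge0.
  by have := normr_ge0 (x ord0 ord0); lra.
by have := SN_ge0 x; lra.
Qed.

Definition mxs (M : 'M[R]_4) : R := \sum_(i < 4) \sum_(j < 4) `|M i j|.

Lemma mxs_ge0 M : 0 <= mxs M.
Proof. by apply: sumr_ge0 => i _; apply: sumr_ge0 => j _. Qed.

Lemma Nm_mul (M : 'M[R]_4) (x : V) : Nm (M *m x) <= mxs M * Nm x.
Proof.
apply: le_trans (Nm_le_sum _) _; rewrite /mxs mulr_suml.
apply: ler_sum => i _; rewrite mxE mulr_suml.
apply: le_trans (ler_norm_sum _ _ _) _.
apply: ler_sum => j _; rewrite normrM ler_wpM2l //.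
exact: Nm_coord.
Qed.

Definition Eop (A : set V) : set V :=
  [set w | exists x y z, [/\ A x, A y, A z & w = x + y - z]].

Lemma cone_Nm r (x : V) : std_double_cone r x = (Nm x < r).
Proof. by []. Qed.

Lemma E_cone r : Eop (std_double_cone r) = std_double_cone (3 * r).
Proof.
apply/seteqP; split => w.
  case=> x [y [z [hx hy hz ->]]]; move: hx hy hz; rewrite !cone_Nm => hx hy hz.
  have := Nm_add (x + y) (- z); have := Nm_add x y; rewrite Nm_opp; lra.
rewrite cone_Nm => hw.
have h3 : Nm (3^-1 *: w) < r.
  rewrite Nm_scale gtr0_norm ?invr_gt0 //; have := Nm_ge0 w; lra.
exists (3^-1 *: w), (3^-1 *: w), (- (3^-1 *: w)); split => //.
  by rewrite cone_Nm Nm_opp.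
by rewrite opprK -!scalerDl; apply/matrixP => i j; rewrite !mxE; field.
Qed.

Lemma E_sup (A : set V) : A `<=` Eop A.
Proof. by move=> x Ax; exists x, x, x; split => //; rewrite addrK. Qed.

Lemma E_mono (A B : set V) : A `<=` B -> Eop A `<=` Eop B.
Proof. by move=> AB w [x [y [z [hx hy hz ->]]]]; exists x, y, z; split => //; apply: AB. Qed.

Lemma E_img (s : V -> V) (L : 'M[R]_4) (c : V) :
  (forall x, s x = L *m x + c) -> forall A, Eop (s @` A) = s @` Eop A.
Proof.
move=> hs A.
have key : forall x y z, s x + s y - s z = s (x + y - z).
  move=> x y z; rewrite !hs !mulmxDr mulmxN.
  move: (L *m x) (L *m y) (L *m z) => p q r'.
  by apply/matrixP => i j; rewrite !mxE; ring.
apply/seteqP; split => w.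
  case=> _ [_ [_ [[x hx <-] [y hy <-] [z hz <-] ->]]].
  by exists (x + y - z); [exists x, y, z | rewrite key].
case=> _ [x [y [z [hx hy hz ->]]]] <-.
by exists (s x), (s y), (s z); split; [exists x | exists y | exists z | rewrite key].
Qed.

Lemma iterE_img (s : V -> V) (L : 'M[R]_4) (c : V) :
  (forall x, s x = L *m x + c) -> forall k A, iter k Eop (s @` A) = s @` iter k Eop A.
Proof. by move=> hs; elim=> //= k IH A; rewrite IH (E_img hs). Qed.

Lemma iterE_cone k r : iter k Eop (std_double_cone r) = std_double_cone (3 ^+ k * r).
Proof. by elim: k => [|k IH] /=; rewrite ?expr0 ?mul1r // IH E_cone exprS mulrA. Qed.

Local Notation K := (@double_cones R).

Lemma poincare_inv (s : V -> V) : poincare s ->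
  exists L c, [/\ L \in unitmx, (forall x, s x = L *m x + c) & injective s].
Proof.
case=> L [c [[_ dL _] hs]].
have uL : L \in unitmx by rewrite unitmxE dL unitr1.
exists L, c; split => // x y; rewrite !hs => /addIr /(congr1 (mulmx (invmx L))).
by rewrite !mulKmx.
Qed.

Lemma image_sub_inj (T : Type) (f : T -> T) (A B : set T) : injective f ->
  (f @` A `<=` f @` B) <-> (A `<=` B).
Proof.
move=> fi; split => AB.
  by move=> x Ax; have [y By /fi <-] : (f @` B) (f x) by apply: AB; exists x.
by move=> _ [x Ax <-]; exists x => //; exact: AB.
Qed.

Lemma image_eq_inj (T : Type) (f : T -> T) (A B : set T) : injective f ->
  (f @` A = f @` B) <-> (A = B).
Proof.
move=> fi; split => [E|->] //; apply/seteqP; split; apply/(image_sub_inj _ _ fi);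
  by rewrite E.
Qed.

Lemma E_K (A : set V) : K A -> K (Eop A).
Proof.
case=> s [r [ps r0 ->]]; have [L [c [_ hs _]]] := poincare_inv ps.
exists s, (3 * r); split => //; first by rewrite mulr_gt0.
by rewrite (E_img hs) E_cone.
Qed.

Definition e0 : V := delta_mx ord0 ord0.

Lemma Nm_e0 : Nm e0 = 1.
Proof.
rewrite /Nm /spatial_norm mxE eqxx /= normr1.
rewrite (eq_bigr (fun _ => 0)) ?big1 // ?sqrtr0 ?addr0 // => i _.
by rewrite mxE eq_sym (negbTE (neq_lift ord0 i)) /= expr0n.
Qed.

Lemma E_strict (A : set V) : K A -> A <> Eop A.
Proof.
case=> s [r [ps r0 ->]]; have [L [c [_ hs si]]] := poincare_inv ps.
rewrite (E_img hs) E_cone => /(image_eq_inj _ _ si) E.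
have : std_double_cone (3 * r) ((2 * r) *: e0).
  by rewrite cone_Nm Nm_scale Nm_e0 mulr1 gtr0_norm ?mulr_gt0 //; lra.
rewrite -E cone_Nm Nm_scale Nm_e0 mulr1 gtr0_norm ?mulr_gt0 //; lra.
Qed.

Lemma E_strict' (A : set V) : K A -> ~ (Eop A `<=` A).
Proof.
move=> KA sub; apply: (E_strict KA); apply/seteqP; split => //; exact: E_sup.
Qed.

Lemma exists_k (o a : set V) : K o -> K a -> exists k, a `<=` iter k Eop o.
Proof.
case=> s [r [ps r0 ->]] [s' [r' [ps' r0' ->]]].
have [L [c [uL hs si]]] := poincare_inv ps.
have [L' [c' [_ hs' _]]] := poincare_inv ps'.
set B := mxs (invmx L) * (mxs L' * r' + Nm (c' - c)).
have B0 : 0 <= B by rewrite /B mulr_ge0 ?mxs_ge0 // addr_ge0 ?Nm_ge0 // mulr_ge0 ?mxs_ge0 // ltW.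
have Br0 : 0 <= B / r by rewrite divr_ge0 // ltW.
have := archi_boundP Br0; set k := Num.Def.archi_bound _ => hk.
exists k; rewrite (iterE_img hs) iterE_cone.
move=> _ [y hy <-].
exists (invmx L *m (L' *m y + (c' - c))); last first.
  by rewrite hs mulKVmx // hs' addrA addrNK.
rewrite cone_Nm.
have k3 : (k%:R : R) <= 3 ^+ k.
  by rewrite -(natrX R 3 k) ler_nat ltnW // ltn_expl.
have hB : Nm (invmx L *m (L' *m y + (c' - c))) <= B.
  apply: le_trans (Nm_mul _ _) _; rewrite /B ler_wpM2l ?mxs_ge0 //.
  apply: le_trans (Nm_add _ _) _; rewrite lerD2r.
  apply: le_trans (Nm_mul _ _) _; rewrite ler_wpM2l ?mxs_ge0 //.
  by rewrite cone_Nm in hy; apply: ltW.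
apply: le_lt_trans hB _.
have : B < k%:R * r by rewrite -ltr_pdivrMr.
move=> h; apply: lt_le_trans h _; apply: ler_wpM2r => //; exact: ltW.
Qed.

Definition Ek k (o : set V) := iter k Eop o.
Definition letter (o : set V) k := Simplex1 (Ek k.+2 o) (Ek k.+1 o) (Ek k o).
Definition kmin (o a : set V) := xget 0%N [set k | a `<=` Ek k o].
Definition fin (o a : set V) n := Simplex1 (Ek n.+1 o) a (Ek n o).
Definition chain (o a : set V) :=
  map (letter o) (iota 0 (kmin o a)) ++ [:: fin o a (kmin o a)].
Definition pf (o a : set V) := if pselect (o = a) then [::] else chain o a.

Lemma Ek_K k o : K o -> K (Ek k o).
Proof. by move=> Ko; elim: k => //= k IH; exact: E_K. Qed.

Lemma Ek_sub k o : Ek k o `<=` Ek k.+1 o.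
Proof. exact: E_sup. Qed.

Lemma Ek_nsub k o : K o -> ~ (Ek k.+1 o `<=` Ek k o).
Proof. by move=> Ko; apply: E_strict'; exact: Ek_K. Qed.

Lemma letter_T1 o k : K o -> T1 K (letter o k).
Proof.
move=> Ko; split.
- split; rewrite /letter; cbn [supp bd0 bd1]; try exact: Ek_K.
    exact: Ek_sub.
  by move=> x /Ek_sub /Ek_sub.
- rewrite /letter; cbn [supp bd0 bd1] => E.
  by have := (@Ek_nsub k.+1 o Ko); apply; rewrite -E.
- rewrite /letter; cbn [supp bd0 bd1] => E.
  have := (@Ek_nsub k o Ko); apply; rewrite -/(Ek k.+1 o) E; exact: Ek_sub.
Qed.

Lemma fin_T1 o a n : K o -> K a -> a `<=` Ek n o -> T1 K (fin o a n).
Proof.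
move=> Ko Ka an; split.
- split; rewrite /fin; cbn [supp bd0 bd1]; try exact: Ek_K;
    [exact: Ka | by move=> x /an /Ek_sub | exact: Ek_sub].
- rewrite /fin; cbn [supp bd0 bd1] => E.
  have := (@Ek_nsub n o Ko); apply; rewrite -E; exact: an.
- rewrite /fin; cbn [supp bd0 bd1] => E.
  by have := (@Ek_nsub n o Ko); apply; rewrite -E.
Qed.

Lemma chain_path o a n : K o -> K a -> a `<=` Ek n o ->
  forall m k, (k + m)%N = n ->
  is_path K (Ek k o) a (map (letter o) (iota k m) ++ [:: fin o a n]).
Proof.
move=> Ko Ka an; elim=> [|m IH] k hk /=.
  rewrite addn0 in hk; subst k; split => //; exact: fin_T1.
split => //; first exact: letter_T1.
by apply: IH; rewrite addSnnS.
Qed.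

Lemma pf_path o a : K o -> K a -> is_path K o a (pf o a).
Proof.
move=> Ko Ka; rewrite /pf; case: pselect => // neq.
have ex := exists_k Ko Ka.
have hk : a `<=` Ek (kmin o a) o := xgetPex 0%N ex.
exact: (chain_path Ko Ka hk (add0n (kmin o a))).
Qed.

Lemma pf_cov s o a : poincare s -> pf (s @` o) (s @` a) = map (act_simplex s) (pf o a).
Proof.
move=> ps; have [L [c [_ hs si]]] := poincare_inv ps.
rewrite /pf; case: pselect => h1; case: pselect => h2 //=.
- by exfalso; apply: h2; apply/(image_eq_inj _ _ si).
- by exfalso; apply: h1; rewrite h2.
have km : kmin (s @` o) (s @` a) = kmin o a.
  rewrite /kmin; congr (xget _ _); apply/funext => k; apply/propext.
  by rewrite /Ek /= (iterE_img hs); exact: image_sub_inj.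
rewrite /chain km map_cat -map_comp /=; congr (_ ++ _).
  apply: eq_map => k; rewrite /letter /act_simplex /Ek.
  by rewrite !(iterE_img hs).
by rewrite /fin /act_simplex /Ek !(iterE_img hs).
Qed.

Lemma part1 : has_covariant_path_frame_system K (@poincare R).
Proof.
exists pf; split.
- exact: pf_path.
- by move=> o _; rewrite /pf; case: pselect => [h|h] /=; [exact: rst_refl | case: h].
- by move=> s a x ps _ _; rewrite pf_cov //; exact: rst_refl.
Qed.

End Mink.


Theorem corollary4p6 :
  (forall R : realType,
     has_covariant_path_frame_system (@double_cones R) (@poincare R)) /\
  (forall R : realType,
     ~ has_covariant_path_frame_system (@circle_intervals R) (@mobius R)).
Proof.
split; [exact: part1 | exact: part2].
Qed.
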